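(* Let $f$ be an $n$-variable Boolean function. Then $\min({FAI}(f),{FAI}(1+f))\le 2\,{AI}(f)$.
   Context: An $n$-variable Boolean function is a map $\mathbb{F}_2^n\to\mathbb{F}_2$, with algebraic degree $\deg$ the degree of its algebraic normal form. ${LDA}(h)$ is the minimum algebraic degree of a nonzero $g$ with $h\cdot g=0$; ${AI}(f)=\min({LDA}(f),{LDA}(1+f))$. ${AN}^c(f)$ is the set of $g$ with $f\cdot g\neq0$, and ${FAI}(f)$ is the minimum of $\deg(g)+\deg(f\cdot g)$ over $g\in{AN}^c(f)$, $g\neq 1$. *)

(* Defs.v *)
From mathcomp Require Import all_boot.
Set Implicit Arguments. Unset Strict Implicit. Unset Printing Implicit Defensive.

(* A point of F_2^n is identified with its support {i | x_i = 1} : {set 'I_n}.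
   An n-variable Boolean function is a finite function on these points. *)
Definition bfun (n : nat) := {ffun {set 'I_n} -> bool}.

Section BoolFun.
Variable n : nat.

(* ANF coefficient of the monomial prod_{i in S} x_i (Moebius transform over F_2). *)
Definition anf_coef (f : bfun n) (S : {set 'I_n}) : bool :=
  \big[addb/false]_(T : {set 'I_n} | T \subset S) f T.

(* algebraic degree: largest monomial of the ANF (0 for the zero function) *)
Definition deg (f : bfun n) : nat := \max_(S : {set 'I_n} | anf_coef f S) #|S|.

Definition bzero : bfun n := [ffun _ => false].
Definition bone : bfun n := [ffun _ => true].
Definition bmul (f g : bfun n) : bfun n := [ffun x => f x && g x].
Definition bcompl (f : bfun n) : bfun n := [ffun x => ~~ f x].

(* LDA(h): minimum degree of a nonzero annihilator g of h (h * g = 0).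
   Convention n+1 when no such g exists (only for h = 1). *)
Definition LDA (h : bfun n) : nat :=
  \big[minn/n.+1]_(g : bfun n | (g != bzero) && (bmul h g == bzero)) deg g.

Definition AI (f : bfun n) : nat := minn (LDA f) (LDA (bcompl f)).

(* FAI(f) = min { deg g + deg (f g) : f g <> 0, g <> 1 }.
   Convention (2n)+1 on the empty set (only when f is constant). *)
Definition FAI (f : bfun n) : nat :=
  \big[minn/(2 * n).+1]_(g : bfun n | (bmul f g != bzero) && (g != bone))
     (deg g + deg (bmul f g)).
End BoolFun.

(* Main.v *)
Require Import Defs.
From mathcomp Require Import all_boot.
Set Implicit Arguments. Unset Strict Implicit.
From mathcomp Require Import zify.

Lemma bigmin_le_seq (I : eqType) (r : seq I) (P : pred I) (F : I -> nat) idx i0 :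
  i0 \in r -> P i0 -> \big[minn/idx]_(i <- r | P i) F i <= F i0.
Proof.
elim: r => [|a r IH] //=; rewrite in_cons big_cons => /orP [/eqP <- ->|Hr Pi].
  by rewrite geq_minl.
case: (P a); last exact: IH.
by rewrite (leq_trans (geq_minr _ _)) // IH.
Qed.

Lemma bigmin_le (I : finType) (P : pred I) (F : I -> nat) idx i0 :
  P i0 -> \big[minn/idx]_(i | P i) F i <= F i0.
Proof. by move=> Pi; apply: bigmin_le_seq => //; rewrite mem_index_enum. Qed.

Lemma bigmin_cases (I : finType) (P : pred I) (F : I -> nat) idx :
  let x := \big[minn/idx]_(i | P i) F i in
  x = idx \/ exists i, P i /\ x = F i.
Proof.
apply: (big_ind (fun x => x = idx \/ exists i, P i /\ x = F i)).
- by left.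
- move=> x y Hx Hy; rewrite /minn; case: (ltnP x y) => H.
  + by [].
  + by [].
- by move=> i Pi; right; exists i.
Qed.

Lemma deg_le n (g : bfun n) : deg g <= n.
Proof.
apply/bigmax_leqP => S _.
by rewrite -[X in _ <= X](card_ord n) max_card.
Qed.

Lemma key n (h k : bfun n) : (forall x, k x = ~~ h x) -> h != bzero n ->
  k != bzero n -> FAI k <= 2 * LDA h.
Proof.
move=> hk hnz knz.
case: (bigmin_cases (fun g : bfun n => (g != bzero n) && (bmul h g == bzero n))
        (@deg n) n.+1) => [E|[g [/andP [gnz /eqP hg] E]]].
- rewrite /LDA E.
  have kk : bmul k k = k by apply/ffunP => x; rewrite ffunE andbb.
  have kn1 : k != bone n.
    apply: contra hnz => /eqP k1; apply/eqP/ffunP => x.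
    have := hk x; rewrite k1 !ffunE; by case: (h x).
  apply: leq_trans (@bigmin_le _ (fun g : bfun n => (bmul k g != bzero n) && (g != bone n))
    (fun g => deg g + deg (bmul k g)) _ k _) _.
    by rewrite kk knz kn1.
  rewrite kk /=; have := deg_le k; lia.
- rewrite /LDA E.
  have kg : bmul k g = g.
    apply/ffunP => x; rewrite ffunE hk.
    have := congr1 (fun F : bfun n => F x) hg; rewrite !ffunE.
    by case: (h x); case: (g x).
  have gn1 : g != bone n.
    apply: contra hnz => /eqP g1; apply/eqP/ffunP => x.
    have := congr1 (fun F : bfun n => F x) hg; rewrite g1 !ffunE.
    by case: (h x).
  apply: leq_trans (@bigmin_le _ (fun g : bfun n => (bmul k g != bzero n) && (g != bone n))
    (fun g => deg g + deg (bmul k g)) _ g _) _.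
    by rewrite kg gnz gn1.
  by rewrite kg /= addnn -mul2n.
Qed.

Theorem corollary1 (n : nat) (f : bfun n)
  (f_nz : f != bzero n) (f_n1 : f != bone n) :
  minn (FAI f) (FAI (bcompl f)) <= 2 * AI f.
Proof.
have cnz : bcompl f != bzero n.
  apply: contra f_n1 => /eqP c0; apply/eqP/ffunP => x.
  have := congr1 (fun F : bfun n => F x) c0; rewrite !ffunE; by case: (f x).
have H1 : FAI (bcompl f) <= 2 * LDA f.
  by apply: key => // x; rewrite ffunE.
have H2 : FAI f <= 2 * LDA (bcompl f).
  by apply: key => // x; rewrite ffunE negbK.
rewrite /AI; lia.
Qed.
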